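(* Let $X$ be a Banach space, $S$ a Hausdorff topological space, and $J\colon X\to C^{b}(S)$ a linear isometry into the sup-normed space of bounded continuous scalar-valued functions on $S$. For $s\in S$ let $\delta_s$ be the evaluation functional $f\mapsto f(s)$ on $C^b(S)$ and put $p_s:=J^{*}(\delta_s)\in X^{*}$. Assume that for all $s\in S$: (N1) $\|p_s\|=1$; (N2) $\operatorname{span}\{p_s\}$ is an $L$-summand in $X^{*}$, i.e. there is a projection $\Pi_s$ on $X^{*}$ with range $\operatorname{span}\{p_s\}$ such that $\|x^{*}\|=\|\Pi_s(x^{*})\|+\|x^{*}-\Pi_s(x^{*})\|$ for all $x^{*}\in X^{*}$; write $\Pi_s(x^{*})=\pi_s(x^{*})p_s$ with $\pi_s\in X^{**}$; (N3) for the equivalence relation $s\sim t$ iff $\Pi_s=\Pi_t$ (equivalently, $p_s$ and $p_t$ are linearly dependent) on $S$, none of the equivalence classes $Q_s=\{t\in S: s\sim t\}$ contains an interior point. Let $T\in L(X)$ and put $q_s:=T^{*}(p_s)\in X^{*}$. If the function $s\mapsto \pi_t(q_s)$ is continuous on $S$ for every $t\in S$, then for every $\varepsilon>0$, with $U_\varepsilon=\{s\in S:\|q_s\|>\|T\|-\varepsilon\}$, $$\sup_{s\in U_\varepsilon}\bigl(|1+\pi_s(q_s)|-(1+|\pi_s(q_s)|)\bigr)\ge 0,$$ and consequently $T$ satisfies the Daugavet equation $\|\mathrm{Id}+T\|=1+\|T\|$.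
   Context: A linear isometry $J\colon X\to C^b(S)$ satisfying (N1) and (N2) is called a nice embedding. Weakly compact operators satisfy the continuity hypothesis. *)

(* Defs.v *)
From mathcomp Require Import all_boot all_order all_algebra.
From mathcomp Require Import all_classical all_reals all_analysis.
From mathcomp Require Export complex.
Import Order.TTheory GRing.Theory Num.Theory.
Import numFieldNormedType.Exports.
Local Open Scope ring_scope.
Local Open Scope classical_set_scope.

Set Implicit Arguments.
Unset Strict Implicit.
Unset Printing Implicit Defensive.

Definition real_or_complex (R : realType) (K : numFieldType) : Prop :=
  K = (R : numFieldType) \/ K = (R[i] : numFieldType).

Definition is_sup (K : numFieldType) (A : set K) (c : K) : Prop :=
  ubound A c /\ lbound (ubound A) c.

Definition is_dual (K : numFieldType) (X : normedModType K) (f : X -> K) : Prop :=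
  (forall (a : K) (x y : X), f (a *: x + y) = a * f x + f y) /\ continuous f.

Definition dnorm_is (K : numFieldType) (X : normedModType K) (f : X -> K) (c : K) : Prop :=
  is_sup [set `|f x| | x in [set x : X | `|x| <= 1]] c.

Definition opnorm_is (K : numFieldType) (X : normedModType K) (T : X -> X) (c : K) : Prop :=
  is_sup [set `|T x| | x in [set x : X | `|x| <= 1]] c.

Definition lin_isometry_Cb (K : numFieldType) (X : normedModType K)
  (S : topologicalType) (J : X -> S -> K) : Prop :=
  (forall (a : K) (x y : X) (s : S), J (a *: x + y) s = a * J x s + J y s) /\
  (forall x : X, continuous (J x)) /\
  (forall x : X, is_sup [set `|J x s| | s in [set: S]] `|x|).

(* Main.v *)
Require Import Defs.
From mathcomp Require Import all_boot all_order all_algebra.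
From mathcomp Require Import all_classical all_reals all_analysis.
From mathcomp Require Import complex.
From mathcomp Require Import ring lra.
Import Order.TTheory GRing.Theory Num.Theory.
Import numFieldNormedType.Exports.
Local Open Scope ring_scope.
Local Open Scope classical_set_scope.
Set Implicit Arguments.
Unset Strict Implicit.
Unset Printing Implicit Defensive.
Lemma is_sup_ub (K : numFieldType) (A : set K) c a : is_sup A c -> A a -> a <= c.
Proof. by case=> H _; apply: H. Qed.

Lemma is_sup_least (K : numFieldType) (A : set K) c M :
  is_sup A c -> (forall a, A a -> a <= M) -> c <= M.
Proof. by case=> _ H HM; apply: H. Qed.

Lemma is_sup_unique (K : numFieldType) (A : set K) c d :
  is_sup A c -> is_sup A d -> c = d.
Proof.
move=> Hc Hd; apply/le_anti/andP; split.
  by apply: (is_sup_least Hc) => a Ha; apply: (is_sup_ub Hd).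
by apply: (is_sup_least Hd) => a Ha; apply: (is_sup_ub Hc).
Qed.

Lemma is_sup_approx (K : numFieldType) (A : set K) c a0 e :
  is_sup A c -> A a0 -> (forall a, A a -> 0 <= a) -> 0 < e ->
  exists a, A a /\ c - e < a.
Proof.
move=> Hs Ha0 Hpos He.
have c0 : 0 <= c by apply: le_trans (Hpos _ Ha0) (is_sup_ub Hs Ha0).
have cr : c \is Num.real by apply: ger0_real.
have er : e \is Num.real by apply: gtr0_real.
apply: contrapT => Hno.
have Hub : forall a, A a -> a <= c - e.
  move=> a Ha; have ar : a \is Num.real by apply: ger0_real; apply: Hpos.
  rewrite real_leNgt ?rpredB //; apply/negP => Hlt; apply: Hno; by exists a.
have := is_sup_least Hs Hub.
have Hlt : c - e < c by rewrite ltrBlDr ltrDl.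
by rewrite (lt_geF Hlt).
Qed.
Definition lin (K : numFieldType) (X : normedModType K) (f : X -> K) :=
  forall (a : K) (x y : X), f (a *: x + y) = a * f x + f y.

Definition bl (K : numFieldType) (X : normedModType K) (f : X -> K) :=
  lin f /\ exists M : K, 0 < M /\ forall x, `|f x| <= M * `|x|.

Lemma lin0 (K : numFieldType) (X : normedModType K) (f : X -> K) : lin f -> f 0 = 0.
Proof.
move=> H; have := H 1 0 0; rewrite scale1r addr0 mul1r => E.
by apply: (@addrI _ (f 0)); rewrite addr0; exact/esym.
Qed.

Lemma linZ (K : numFieldType) (X : normedModType K) (f : X -> K) a x :
  lin f -> f (a *: x) = a * f x.
Proof. by move=> H; have := H a x 0; rewrite addr0 (lin0 H) addr0. Qed.

Lemma linD (K : numFieldType) (X : normedModType K) (f : X -> K) x y :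
  lin f -> f (x + y) = f x + f y.
Proof. by move=> H; have := H 1 x y; rewrite scale1r mul1r. Qed.

Lemma linN (K : numFieldType) (X : normedModType K) (f : X -> K) x :
  lin f -> f (- x) = - f x.
Proof. by move=> H; rewrite -scaleN1r (linZ _ _ H) mulN1r. Qed.

Lemma bl_cont (K : numFieldType) (X : normedModType K) (f : X -> K) :
  bl f -> continuous f.
Proof.
case=> Hl [M [M0 HM]] x; apply/cvgrPdist_lt => e e0.
have eM : 0 < e / M by rewrite divr_gt0.
near=> y.
have Hy : `|x - y| < e / M.
  near: y. have := @near_ball _ _ x _ eM. rewrite -ball_normE. done.
have -> : f x - f y = f (x - y) by rewrite linD // linN.
apply: le_lt_trans (HM _) _.
by rewrite -ltr_pdivlMl // mulrC.
Unshelve. all: by end_near.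
Qed.
Lemma dual_bl (K : numFieldType) (X : normedModType K) (f : X -> K) :
  is_dual f -> bl f.
Proof.
case=> Hl Hc; split => //.
have f0 : f 0 = 0 by apply: lin0.
have := (cvgrPdist_lt _ _).1 (Hc 0) 1 ltr01.
rewrite f0 => H0; have [d /= d0 Hd] := (nbhs_ballP _ _).1 (H0 _).
exists (2 / d); split; first by rewrite divr_gt0.
move=> x; have [->|x0] := eqVneq x 0; first by rewrite f0 !normr0 mulr0.
have nx : 0 < `|x| by rewrite normr_gt0.
set a := d / (2 * `|x|).
have a0 : 0 < a by rewrite divr_gt0 // mulr_gt0.
have : ball 0 d (a *: x).
  rewrite -ball_normE /ball_ /= sub0r normrN normrZ gtr0_norm //.
  rewrite /a invfM -mulrA mulfVK ?gt_eqF // gtr_pMr // invf_lt1 //.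
  by rewrite ltr1n.
move=> /Hd /=; rewrite sub0r normrN (linZ _ _ Hl) normrM gtr0_norm // => H.
have : `|f x| < a^-1 by rewrite -(ltr_pM2l a0) mulfV ?gt_eqF.
by rewrite /a invf_div mulrAC => /ltW.
Qed.
Lemma bl_dual (K : numFieldType) (X : normedModType K) (f : X -> K) :
  bl f -> is_dual f.
Proof. by move=> H; split; [case: H|apply: bl_cont]. Qed.

Definition sup_ex (K : numFieldType) := forall A : set K, (exists a, A a) ->
  (forall a, A a -> 0 <= a) -> (exists M, forall a, A a -> a <= M) ->
  exists c, is_sup A c.

Definition dn (K : numFieldType) (X : normedModType K) (f : X -> K) : K :=
  xget 0 [set c | dnorm_is f c].

Lemma sup_homog (K : numFieldType) (X : normedModType K) (h : X -> K) c :
  (forall a x, h (a *: x) = `|a| * h x) ->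
  is_sup [set h x | x in [set x : X | `|x| <= 1]] c -> forall x, h x <= c * `|x|.
Proof.
move=> Hh Hs x; have [->|x0] := eqVneq x 0.
  have h0 : h 0 = 0 by rewrite -(scale0r (0:X)) Hh normr0 mul0r.
  by rewrite h0 normr0 mulr0.
have nx : 0 < `|x| by rewrite normr_gt0.
have : h (`|x|^-1 *: x) <= c.
  apply: (is_sup_ub Hs); exists (`|x|^-1 *: x) => //=.
  by rewrite normrZ normfV normr_id mulVf ?gt_eqF.
by rewrite Hh normfV normr_id ler_pdivrMl // mulrC.
Qed.

Lemma ex_dnorm (K : numFieldType) (X : normedModType K) (f : X -> K) :
  sup_ex K -> bl f -> exists c, dnorm_is f c.
Proof.
move=> HS [Hl [M [M0 HM]]]; apply: HS.
- by exists `|f 0|, 0 => //=; rewrite normr0.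
- by move=> a [x _ <-].
- exists M => a [x /= Hx <-]; apply: le_trans (HM x) _.
  by rewrite ler_piMr // ltW.
Qed.

Lemma dnP (K : numFieldType) (X : normedModType K) (f : X -> K) :
  sup_ex K -> bl f -> dnorm_is f (dn f).
Proof. by move=> HS Hf; apply: xgetPex; apply: ex_dnorm. Qed.

Lemma dn_eq (K : numFieldType) (X : normedModType K) (f : X -> K) c :
  sup_ex K -> bl f -> dnorm_is f c -> dn f = c.
Proof. by move=> HS Hf Hc; apply: is_sup_unique (dnP HS Hf) Hc. Qed.

Lemma dn_le (K : numFieldType) (X : normedModType K) (f : X -> K) x :
  sup_ex K -> bl f -> `|f x| <= dn f * `|x|.
Proof.
move=> HS Hf; apply: (sup_homog (h := fun x => `|f x|)) (dnP HS Hf) x.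
by move=> a y; rewrite (linZ _ _ Hf.1) normrM.
Qed.

Lemma dn_least (K : numFieldType) (X : normedModType K) (f : X -> K) M :
  sup_ex K -> bl f -> (forall x, `|x| <= 1 -> `|f x| <= M) -> dn f <= M.
Proof.
by move=> HS Hf HM; apply: (is_sup_least (dnP HS Hf)) => a [x /= Hx <-]; apply: HM.
Qed.

Lemma dn_ge0 (K : numFieldType) (X : normedModType K) (f : X -> K) :
  sup_ex K -> bl f -> 0 <= dn f.
Proof.
move=> HS Hf; apply: le_trans (_ : `|f 0| <= _); first by [].
by apply: (is_sup_ub (dnP HS Hf)); exists 0 => //=; rewrite normr0.
Qed.

Lemma dn_approx (K : numFieldType) (X : normedModType K) (f : X -> K) e :
  sup_ex K -> bl f -> 0 < e -> exists x, `|x| <= 1 /\ dn f - e < `|f x|.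
Proof.
move=> HS Hf e0.
have [a [[x Hx <-] Ha]] := is_sup_approx (a0 := `|f 0|) (dnP HS Hf)
  (ltac:(by exists 0 => //=; rewrite normr0)) (ltac:(by move=> a [y _ <-])) e0.
by exists x.
Qed.

Lemma dn0 (K : numFieldType) (X : normedModType K) (f : X -> K) :
  sup_ex K -> bl f -> dn f <= 0 -> forall x, f x = 0.
Proof.
move=> HS Hf H x; apply/eqP; rewrite -normr_le0.
apply: le_trans (dn_le x HS Hf) _.
by rewrite mulr_le0_ge0 ?normr_ge0.
Qed.

Lemma bl_comb (K : numFieldType) (X : normedModType K) (f g : X -> K) a :
  bl f -> bl g -> bl (fun x => a * f x + g x).
Proof.
move=> [Hf [M1 [M10 H1]]] [Hg [M2 [M20 H2]]]; split.
  by move=> b x y /=; rewrite Hf Hg; ring.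
exists (`|a| * M1 + M2); split.
  by rewrite ltr_pwDr // mulr_ge0 // ltW.
move=> x; apply: le_trans (ler_normD _ _) _.
rewrite mulrDl normrM -mulrA; apply: lerD => //.
by rewrite ler_wpM2l.
Qed.

Lemma bl_add (K : numFieldType) (X : normedModType K) (f g : X -> K) :
  bl f -> bl g -> bl (fun x => f x + g x).
Proof.
move=> Hf Hg; have := bl_comb 1 Hf Hg.
by have -> : (fun x => 1 * f x + g x) = (fun x => f x + g x)
  by apply: funext => x; rewrite mul1r.
Qed.

Lemma bl0 (K : numFieldType) (X : normedModType K) : bl (fun _ : X => (0 : K)).
Proof.
split; first by move=> a x y; rewrite mulr0 addr0.
by exists 1; split => // x; rewrite normr0 mul1r.
Qed.

Lemma bl_scale (K : numFieldType) (X : normedModType K) (f : X -> K) a :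
  bl f -> bl (fun x => a * f x).
Proof.
move=> Hf; have := bl_comb a Hf (bl0 X).
by have -> : (fun x => a * f x + 0) = (fun x => a * f x)
  by apply: funext => x; rewrite addr0.
Qed.

Lemma bl_sub (K : numFieldType) (X : normedModType K) (f g : X -> K) :
  bl f -> bl g -> bl (fun x => f x - g x).
Proof.
move=> Hf Hg; have := bl_comb (-1) Hg Hf.
by have -> : (fun x => -1 * g x + f x) = (fun x => f x - g x)
  by apply: funext => x; rewrite mulN1r addrC.
Qed.

Lemma dn_tri (K : numFieldType) (X : normedModType K) (f g : X -> K) :
  sup_ex K -> bl f -> bl g -> dn (fun x => f x + g x) <= dn f + dn g.
Proof.
move=> HS Hf Hg; apply: dn_least => //; first exact: bl_add.
move=> x Hx; apply: le_trans (ler_normD _ _) _; apply: lerD.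
  by apply: le_trans (dn_le x HS Hf) _; rewrite ler_piMr // dn_ge0.
by apply: le_trans (dn_le x HS Hg) _; rewrite ler_piMr // dn_ge0.
Qed.

Lemma dn_scale (K : numFieldType) (X : normedModType K) (f : X -> K) a :
  sup_ex K -> bl f -> dn (fun x => a * f x) = `|a| * dn f.
Proof.
move=> HS Hf; apply/le_anti/andP; split.
  apply: dn_least => //; first exact: bl_scale.
  move=> x Hx; rewrite normrM ler_wpM2l //.
  by apply: le_trans (dn_le x HS Hf) _; rewrite ler_piMr // dn_ge0.
have [->|a0] := eqVneq a 0.
  by rewrite normr0 mul0r dn_ge0 //; apply: bl_scale.
have na : 0 < `|a| by rewrite normr_gt0.
rewrite -ler_pdivlMl //; apply: dn_least => // x Hx.
rewrite ler_pdivlMl //.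
have := dn_le x HS (bl_scale a Hf); rewrite normrM => H.
apply: le_trans H _; rewrite ler_piMr // dn_ge0 //; exact: bl_scale.
Qed.
Definition Lproj (K : numFieldType) (X : normedModType K) (A : (X -> K) -> (X -> K)) :=
  [/\ (forall f, bl f -> bl (A f)),
      (forall f g, bl f -> bl g -> A (fun x => f x - g x) = (fun x => A f x - A g x)) &
      (forall f, bl f -> dn f = dn (A f) + dn (fun x => f x - A f x))].

Lemma GL (K : numFieldType) (X : normedModType K) (A B : (X -> K) -> (X -> K)) :
  sup_ex K -> Lproj A -> Lproj B ->
  forall y, bl y -> A y = y -> B y = A (B y).
Proof.
move=> HS [Abl Asub AL] [Bbl Bsub BL] y yb Ay.
set z := B y.
have zb : bl z by apply: Bbl.
have Azb : bl (A z) by apply: Abl.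
have e1 := BL y yb.
have e2 := AL z zb.
have yzb : bl (fun x => y x - z x) by apply: bl_sub.
have e3 := AL _ yzb.
rewrite Asub // Ay in e3.
have e4 : dn y <= dn (A z) + dn (fun x => y x - A z x).
  have := dn_tri HS Azb (bl_sub yb Azb).
  by have -> : (fun x => A z x + (y x - A z x)) = y
    by apply: funext => x; rewrite addrC subrK.
have zAzb : bl (fun x => z x - A z x) by apply: bl_sub.
have yAzb : bl (fun x => y x - A z x) by apply: bl_sub.
set a := dn (A z) in e2 e4. set b := dn (fun x => z x - A z x) in e2.
set c := dn (fun x => y x - A z x) in e3 e4.
set r := dn (fun x => y x - z x - (y x - A z x)) in e3.
rewrite -/z in e1.
have r0 : 0 <= r by apply: dn_ge0 => //; apply: bl_sub => //; apply: Abl.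
have E : a + c + (b + r) = dn y by rewrite e1 e2 e3; ring.
have : a + c + (b + r) <= a + c + 0 by rewrite E addr0.
rewrite lerD2l => H.
have b0 : b <= 0 by apply: le_trans H; rewrite lerDl.
have := dn0 HS zAzb b0 => H0.
by apply: funext => x; apply/eqP; rewrite -subr_eq0 H0.
Qed.

Lemma Lcomm (K : numFieldType) (X : normedModType K) (A B : (X -> K) -> (X -> K)) :
  sup_ex K -> Lproj A -> Lproj B -> (forall f, bl f -> A (A f) = A f) ->
  forall f, bl f -> B (A f) = A (B f).
Proof.
move=> HS LA LB Aid f fb.
have [Abl Asub AL] := LA. have [Bbl Bsub BL] := LB.
have h1 := GL HS LA LB (Abl _ fb) (Aid _ fb).
pose A' := fun g : X -> K => (fun x => g x - A g x).
have LA' : Lproj A'.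
  split.
  - by move=> g gb; apply: bl_sub => //; apply: Abl.
  - move=> g h gb hb; rewrite /A' Asub //; apply: funext => x; ring.
  - move=> g gb; rewrite /A' addrC.
    have -> : (fun x => g x - (g x - A g x)) = A g by apply: funext => x; ring.
    exact: AL.
have A'id : A' (A' f) = A' f.
  by rewrite /A' Asub ?Aid //; [apply: funext => x; ring|apply: Abl].
have h2 := GL HS LA' LB (bl_sub fb (Abl _ fb)) A'id.
rewrite /A' Bsub // in h2; last exact: Abl.
have Bfb : bl (B f) by apply: Bbl.
have BAfb : bl (B (A f)) by apply: Bbl; apply: Abl.
rewrite Asub // in h2.
have H3 : forall x, A (B f) x - A (B (A f)) x = 0.
  move=> x; have := congr1 (fun h => h x) h2 => /= /eqP.
  by rewrite -subr_eq0 => /eqP <-; ring.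
rewrite {1}h1; apply: funext => x; apply/esym/subr0_eq; exact: H3.
Qed.
Lemma sup_ex_RoC (R : realType) (K : numFieldType) : real_or_complex R K -> sup_ex K.
Proof.
case=> ->.
  move=> A [a0 Ha0] Hpos [M HM].
  have hs : has_sup A by split; [exists a0|exists M => a Ha; apply: HM].
  exists (sup A); split; first by move=> a Ha; apply: sup_upper_bound.
  by move=> w Hw; apply: ge_sup => //; exists a0.
move=> A [a0 Ha0] Hpos [M HM].
pose A' := [set complex.Re a | a in A].
have ImA : forall a, A a -> complex.Im a = 0.
  by move=> a /Hpos; rewrite lecE => /andP [/eqP -> _].
have hs : has_sup A'.
  split; first by exists (complex.Re a0), a0.
  exists (complex.Re M) => _ [a Ha <-].
  by move: (HM a Ha); rewrite lecE => /andP [_].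
exists (Complex (sup A') 0); split.
  move=> a Ha; rewrite lecE /= ImA // eqxx /=.
  by apply: sup_upper_bound => //; exists a.
move=> w Hw; rewrite lecE /=.
have := Hw _ Ha0; rewrite lecE => /andP [/eqP -> _]; rewrite ImA // eqxx /=.
apply: ge_sup; first by exists (complex.Re a0), a0.
move=> _ [a Ha <-]; by move: (Hw a Ha); rewrite lecE => /andP [_].
Qed.

Lemma archi_RoC (R : realType) (K : numFieldType) : real_or_complex R K ->
  forall x : K, 0 <= x -> exists n : nat, x < n%:R.
Proof.
case=> ->.
  by move=> x x0; exists (Num.Def.archi_bound x); apply: archi_boundP.
move=> x; rewrite lecE => /andP [/eqP Hi Hr].
exists (Num.Def.archi_bound (complex.Re x)).
have -> : x = real_complex R (complex.Re x) by case: x Hi Hr => a b /= ->.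
rewrite -(rmorph_nat (real_complex R)) ltcR /=; exact: archi_boundP.
Qed.
Lemma openK (K : numFieldType) (S : topologicalType) (g : S -> K) (c : K) :
  continuous g -> open [set s | c < `|g s|].
Proof.
move=> Hg; rewrite openE => s /= Hs.
have e0 : 0 < `|g s| - c by rewrite subr_gt0.
have := (cvgrPdist_lt _ _).1 (Hg s) _ e0.
move=> H; apply: filterS (H _) => s' /= Hs'.
have := lerB_normD (g s) (- g s'); rewrite normrN => H1.
have := le_lt_trans H1 Hs'.
by rewrite ltrD2l ltrN2.
Qed.

Fixpoint lall (A : Type) (P : A -> Prop) (l : seq A) : Prop :=
  if l is a :: l' then P a /\ lall P l' else True.

Lemma lall_mono (A : Type) (P Q : A -> Prop) (l : seq A) :
  (forall a, P a -> Q a) -> lall P l -> lall Q l.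
Proof. by move=> H; elim: l => //= a l IH [Ha Hl]; split; [apply: H|apply: IH]. Qed.

Lemma big_lall (K : numFieldType) (A : Type) (F G : A -> K) (l : seq A) :
  lall (fun u => F u = G u) l -> \sum_(u <- l) F u = \sum_(u <- l) G u.
Proof.
elim: l => [|a l IH] /=; first by rewrite !big_nil.
by case=> Ha H; rewrite !big_cons Ha IH.
Qed.

Lemma big_lall_ge (K : numFieldType) (A : Type) (F : A -> K) (l : seq A) (k : K) :
  lall (fun u => k < F u) l -> k *+ size l <= \sum_(u <- l) F u.
Proof.
elim: l => [|a l IH] /=; first by rewrite big_nil mulr0n.
by case=> Ha H; rewrite big_cons mulrS; apply: lerD; [apply: ltW|apply: IH].
Qed.

Fixpoint orthl (S : Type) (K : numFieldType) (X : Type) (pi : S -> (X -> K) -> K)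
  (p : S -> X -> K) (ts : seq S) : Prop :=
  if ts is t :: ts' then lall (fun u => pi u (p t) = 0) ts' /\ orthl pi p ts' else True.

Lemma is_sup_approx0 (K : numFieldType) (A : set K) c e :
  is_sup A c -> 0 <= c -> (forall a, A a -> 0 <= a) -> 0 < e ->
  exists a, A a /\ c - e < a.
Proof.
move=> Hs c0 Hpos He.
have cr : c \is Num.real by apply: ger0_real.
have er : e \is Num.real by apply: gtr0_real.
apply: contrapT => Hno.
have Hub : forall a, A a -> a <= c - e.
  move=> a Ha; have ar : a \is Num.real by apply: ger0_real; apply: Hpos.
  rewrite real_leNgt ?rpredB //; apply/negP => Hlt; apply: Hno; by exists a.
have := is_sup_least Hs Hub.
have Hlt : c - e < c by rewrite ltrBlDr ltrDl.
by rewrite (lt_geF Hlt).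
Qed.

Unset Implicit Arguments.

Theorem lemma2p4 (R : realType) (K : numFieldType) (hK : real_or_complex R K)
  (X : completeNormedModType K) (S : topologicalType) (hS : hausdorff_space S)
  (J : X -> S -> K) (hJ : lin_isometry_Cb J)
  (* p_s = J^*(delta_s) *)
  (p : S -> X -> K) (hp : forall s x, p s x = J x s)
  (* N1 *)
  (N1 : forall s, dnorm_is (p s) 1)
  (* N2: Pi_s(x^* ) = pi_s(x^* ) p_s is an L-projection onto span{p_s} *)
  (pi : S -> (X -> K) -> K)
  (pi_lin : forall s (a : K) (f g : X -> K), is_dual f -> is_dual g ->
     pi s (fun x => a * f x + g x) = a * pi s f + pi s g)
  (pi_p : forall s, pi s (p s) = 1)
  (N2 : forall s (f : X -> K), is_dual f -> forall a b c : K,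
     dnorm_is f a -> dnorm_is (fun x => pi s f * p s x) b ->
     dnorm_is (fun x => f x - pi s f * p s x) c -> a = b + c)
  (* N3: the classes of s ~ t iff Pi_s = Pi_t have empty interior *)
  (N3 : forall s : S, interior [set t : S | forall f : X -> K, is_dual f ->
          (fun x => pi s f * p s x) = (fun x => pi t f * p t x)] = set0)
  (* T in L(X), q_s = T^*(p_s) *)
  (T : X -> X) (T_lin : forall (a : K) (x y : X), T (a *: x + y) = a *: T x + T y)
  (T_cont : continuous T)
  (q : S -> X -> K) (hq : forall s x, q s x = p s (T x))
  (nT : K) (hnT : opnorm_is T nT)
  (nq : S -> K) (hnq : forall s, dnorm_is (q s) (nq s))
  (hcont : forall t : S, continuous (fun s : S => pi t (q s))) :
  (forall eps : K, 0 < eps ->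
     (* sup_{s in U_eps} (|1 + pi_s(q_s)| - (1 + |pi_s(q_s)|)) >= 0 *)
     forall delta : K, 0 < delta ->
       exists s : S, nT - eps < nq s /\
         - delta < `|1 + pi s (q s)| - (1 + `|pi s (q s)|)) /\
  opnorm_is (fun x => x + T x) (1 + nT).
Proof.
have HS := sup_ex_RoC hK.
have HA := archi_RoC hK.
case: hJ => Jlin [Jcont Jiso].
have Jle : forall x s, `|J x s| <= `|x|.
  by move=> x s; apply: (is_sup_ub (Jiso x)); exists s.
have pbl : forall s, bl (p s).
  move=> s; split; first by move=> a x y; rewrite !hp Jlin.
  by exists 1; split => // x; rewrite mul1r hp.
have T0 : T 0 = 0.
  have := T_lin 1 0 0; rewrite scale1r addr0 scale1r => E.
  by apply: (@addrI _ (T 0)); rewrite addr0; exact/esym.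
have TZ : forall a x, T (a *: x) = a *: T x.
  by move=> a x; have := T_lin a x 0; rewrite addr0 T0 addr0.
have nTle : forall x, `|T x| <= nT * `|x|.
  by apply: (sup_homog (h := fun x => `|T x|)) hnT => a x; rewrite TZ normrZ.
have nT0 : 0 <= nT.
  by apply: le_trans (is_sup_ub hnT (_ : _ `|T 0|)); [rewrite T0 normr0|exists 0 => //=; rewrite normr0].
have qle : forall s x, `|q s x| <= nT * `|x|.
  by move=> s x; rewrite hq hp; apply: le_trans (Jle _ _) (nTle x).
have qbl : forall s, bl (q s).
  move=> s; split; first by move=> a x y; rewrite !hq T_lin; case: (pbl s) => L _; rewrite L.
  exists (nT + 1); split; first by rewrite ltr_wpDl.
  move=> x; apply: le_trans (qle s x) _; rewrite ler_wpM2r // ?normr_ge0 //.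
  by rewrite lerDl.
have nqE : forall s, nq s = dn (q s) by move=> s; apply/esym/dn_eq.
have nq_le : forall s, nq s <= nT.
  move=> s; rewrite nqE; apply: dn_least => // x Hx.
  by apply: le_trans (qle s x) _; rewrite ler_piMr.
pose P := fun t (f : X -> K) => (fun x => pi t f * p t x).
have pi0 : forall t, pi t (fun _ => 0) = 0.
  move=> t; have := pi_lin t 1 _ _ (bl_dual (bl0 X)) (bl_dual (bl0 X)).
  have -> : (fun x : X => 1 * (0 : K) + 0) = (fun _ => 0) by apply: funext => x; rewrite mul1r addr0.
  by rewrite mul1r => E; apply: (@addrI _ (pi t (fun _ => 0))); rewrite addr0; exact/esym.
have piZ : forall t a f, bl f -> pi t (fun x => a * f x) = a * pi t f.
  move=> t a f fb; have := pi_lin t a _ _ (bl_dual fb) (bl_dual (bl0 X)).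
  have -> : (fun x => a * f x + 0) = (fun x => a * f x) by apply: funext => x; rewrite addr0.
  by rewrite pi0 addr0.
have piB : forall t f g, bl f -> bl g -> pi t (fun x => f x - g x) = pi t f - pi t g.
  move=> t f g fb gb; have := pi_lin t (-1) _ _ (bl_dual gb) (bl_dual fb).
  have -> : (fun x => -1 * g x + f x) = (fun x => f x - g x) by apply: funext => x; rewrite mulN1r addrC.
  by rewrite mulN1r addrC.
have piD : forall t f g, bl f -> bl g -> pi t (fun x => f x + g x) = pi t f + pi t g.
  move=> t f g fb gb; have := pi_lin t 1 _ _ (bl_dual fb) (bl_dual gb).
  have -> : (fun x => 1 * f x + g x) = (fun x => f x + g x) by apply: funext => x; rewrite mul1r.
  by rewrite mul1r.
have Pbl : forall t f, bl f -> bl (P t f) by move=> t f _; apply: bl_scale.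
have LP : forall t, Lproj (P t).
  move=> t; split.
  - exact: Pbl.
  - by move=> f g fb gb; rewrite /P piB //; apply: funext => x; ring.
  - move=> f fb; apply: (N2 t f (bl_dual fb)); apply: dnP => //.
    + exact: Pbl.
    + by apply: bl_sub => //; apply: Pbl.
have Pid : forall t f, bl f -> P t (P t f) = P t f.
  by move=> t f fb; rewrite /P piZ // pi_p mulr1.
have dnp : forall t, dn (p t) = 1 by move=> t; apply: dn_eq.
have dnPE : forall t f, bl f -> dn (P t f) = `|pi t f|.
  by move=> t f fb; rewrite /P dn_scale // dnp mulr1.
have Pcomm : forall s t f, bl f -> P s (P t f) = P t (P s f).
  by move=> s t f fb; apply: (Lcomm HS (LP t) (LP s) (Pid t)).
pose E := fun s t => forall f, is_dual f -> P s f = P t f.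
have Esym : forall s t, E s t -> E t s by move=> s t H f fd; rewrite H.
have pne0 : forall t, exists x, p t x != 0.
  move=> t; have [x [_ Hx]] := dn_approx HS (pbl t) ltr01.
  by exists x; rewrite -normr_gt0; move: Hx; rewrite dnp subrr.
have Dep : forall s t mu, (forall x, p s x = mu * p t x) -> E s t.
  move=> s t mu Hmu.
  have mu0 : mu != 0.
    apply/negP => /eqP m0; have [x Hx] := pne0 s.
    by move: Hx; rewrite Hmu m0 mul0r eqxx.
  have ps : p s = (fun x => mu * p t x) by apply: funext.
  have pt : p t = (fun x => mu^-1 * p s x).
    by apply: funext => x; rewrite Hmu mulrA mulVf // mul1r.
  have pits : pi t (p s) = mu by rewrite ps piZ // pi_p mulr1.
  have pist : pi s (p t) = mu^-1 by rewrite pt piZ // pi_p mulr1.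
  move=> f fd; have fb := dual_bl fd.
  have h1 : P t (P s f) = P s f.
    by rewrite /P piZ // pits; apply: funext => x; rewrite Hmu mulrA.
  have h2 : P s (P t f) = P t f.
    by rewrite /P piZ // pist; apply: funext => x; rewrite pt -mulrA.
  by rewrite -h1 -Pcomm // h2.
have Ortho : forall s t, pi t (p s) != 0 -> E s t.
  move=> s t a0; apply: Esym.
  have Pss : P s (p s) = p s by rewrite /P pi_p; apply: funext => x; rewrite mul1r.
  have := Pcomm t s (p s) (pbl s); rewrite Pss /P piZ // => H.
  apply: (Dep t s (pi s (p t))) => x.
  have := congr1 (fun h => h x) H => /= /eqP.
  by rewrite -mulrA (inj_eq (mulfI a0)) => /eqP.
have Pss : forall s, P s (p s) = p s.
  by move=> s; rewrite /P pi_p; apply: funext => x; rewrite mul1r.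
have Sum : forall ts f, orthl pi p ts -> bl f -> \sum_(t <- ts) `|pi t f| <= dn f.
  elim=> [|t ts IH] f /=; first by rewrite big_nil => _ fb; apply: dn_ge0.
  case=> Ho Hts fb; rewrite big_cons.
  have gb : bl (fun x => f x - P t f x) := bl_sub fb (Pbl t f fb).
  have [_ _ Lt] := LP t.
  rewrite (Lt f fb) dnPE //; apply: lerD => //.
  rewrite -(big_lall (F := fun u => `|pi u (fun x => f x - P t f x)|)); first exact: IH.
  apply: lall_mono Ho => u Hu; rewrite piB //; last exact: Pbl.
  by rewrite /P /= (piZ u (pi t f) (p t)) // Hu mulr0 subr0.
have N3' : forall s V, open V -> V s -> exists t, V t /\ ~ E s t.
  move=> s V oV Vs; apply: contrapT => Hno.
  have H3 := N3 s.
  have : (set0 : set S) s; last by [].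
  rewrite -H3 /interior.
  apply: filterS (open_nbhs_nbhs (conj oV Vs)) => t0 Vt /=.
  by apply: contrapT => nE; apply: Hno; exists t0.
have Avoid : forall t s0, ~ E t s0 -> exists D : S -> K,
    continuous D /\ D s0 != 0 /\ forall s, E t s -> D s = 0.
  move=> t s0 nE.
  have [x2 Hx2] := pne0 t.
  pose mu := p s0 x2 / p t x2.
  have [x1 Hx1] : exists x1, p s0 x1 != mu * p t x1.
    apply: contrapT => H; apply: nE; apply: Esym; apply: (Dep s0 t mu) => x.
    apply/eqP; apply: contrapT => Hne; apply: H; exists x; exact/negP.
  exists (fun s => J x1 s * p t x2 - J x2 s * p t x1); split.
    move=> s; apply: (@continuousB _ _ _ (fun s => J x1 s * p t x2) (fun s => J x2 s * p t x1)).
      by apply: (@continuousM _ _ (J x1) (fun=> p t x2)); [exact: Jcont|exact: cst_continuous].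
    by apply: (@continuousM _ _ (J x2) (fun=> p t x1)); [exact: Jcont|exact: cst_continuous].
  split.
    rewrite -!hp; apply: contraNneq Hx1 => /eqP; rewrite subr_eq0 => /eqP H.
    by rewrite /mu mulrAC -H mulfK.
  move=> s Hs; have := Hs (p s) (bl_dual (pbl s)); rewrite Pss => H.
  rewrite -!hp -H /P; ring.
have part1 : forall eps : K, 0 < eps -> forall delta : K, 0 < delta ->
   exists s, nT - eps < nq s /\ - delta < `|1 + pi s (q s)| - (1 + `|pi s (q s)|).
  move=> eps e0 delta d0.
  apply: contrapT => Hno.
  pose U := [set s | nT - eps < nq s].
  have Uopen : open U.
    rewrite openE => s Us.
    have ee : 0 < nq s - (nT - eps) by rewrite subr_gt0.
    have [x [Hx1 Hx]] := dn_approx HS (qbl s) ee.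
    rewrite -nqE (_ : nq s - (nq s - (nT - eps)) = nT - eps) in Hx; last by ring.
    have gE : (fun s' => q s' x) = J (T x) by apply: funext => s'; rewrite hq hp.
    have oV : open [set s' | nT - eps < `|(fun s' => q s' x) s'|].
      by apply: openK; rewrite gE; apply: Jcont.
    apply: filterS (open_nbhs_nbhs (conj oV Hx)) => s' /= Hs'.
    rewrite /U /=; apply: lt_le_trans Hs' _; rewrite nqE.
    by apply: le_trans (dn_le x HS (qbl s')) _; rewrite ler_piMr // dn_ge0.
  have Une : exists s, U s.
    have [a [[x Hx <-] Ha]] := is_sup_approx0 hnT nT0 (ltac:(by move=> ? [? _ <-])) e0.
    have ee : 0 < `|T x| - (nT - eps) by rewrite subr_gt0.
    have [b [[s _ <-] Hb]] := is_sup_approx0 (Jiso (T x)) (normr_ge0 _)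
       (ltac:(by move=> ? [? _ <-])) ee.
    exists s; rewrite /U /=.
    rewrite (_ : `|T x| - (`|T x| - (nT - eps)) = nT - eps) in Hb; last by ring.
    apply: lt_le_trans Hb _; rewrite -hp -hq nqE.
    by apply: le_trans (dn_le x HS (qbl s)) _; rewrite ler_piMr // dn_ge0.
  pose k := delta / 2 / 2.
  have k0 : 0 < k by rewrite /k !divr_gt0.
  have Ubig : forall s, U s -> k < `|pi s (q s)|.
    move=> s Us; set z := pi s (q s).
    have Hr : ~ (- delta < `|1 + z| - (1 + `|z|)) by move=> H; apply: Hno; exists s.
    have Hle : `|1 + z| - (1 + `|z|) <= - delta.
      rewrite real_leNgt; first exact/negP.
        by rewrite rpredB ?rpredD ?normr_real ?rpred1.
      by rewrite rpredN gtr0_real.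
    have H1 := lerB_normD 1 z; rewrite normr1 in H1.
    have H2 : delta <= `|z| + `|z|.
      have : 1 - `|z| - (1 + `|z|) <= - delta by apply: le_trans Hle; rewrite lerD2r.
      by rewrite (_ : 1 - `|z| - (1 + `|z|) = - (`|z| + `|z|)) ?lerN2 //; ring.
    have H3 : delta / 2 <= `|z|.
      by rewrite ler_pdivrMr // (_ : `|z| * 2 = `|z| + `|z|) //; ring.
    apply: lt_le_trans H3; rewrite /k ltr_pdivrMr // ltr_pMr ?divr_gt0 //.
    by rewrite ltr1n.
  have Iter : forall n : nat, exists ts : seq S, size ts = n /\ orthl pi p ts /\
     exists W : set S, open W /\ (exists w, W w) /\ (forall s, W s -> U s /\
        lall (fun t => k < `|pi t (q s)|) ts /\ lall (fun t => ~ E t s) ts).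
    elim=> [|n [ts [Hsz [Hor [W [oW [[w Ww] HW]]]]]]].
      exists [::]; split => //; split => //; exists U; split => //.
    have [wU [Hk HnE]] := HW w Ww.
    pose V := W `&` [set s | k < `|pi w (q s)|].
    have oV : open V by apply: openI => //; apply: openK; exact: hcont.
    have Vw : V w by split => //; apply: Ubig.
    have [s0 [Vs0 nE]] := N3' w V oV Vw.
    have [D [Dc [Ds0 DE]]] := Avoid w s0 nE.
    exists (w :: ts); split; first by rewrite /= Hsz.
    split.
      split => //; apply: lall_mono HnE => u nEu.
      apply/eqP; apply: contrapT => /negP H; apply: nEu; apply: Esym; exact: Ortho _ _ H.
    exists (V `&` [set s | 0 < `|D s|]); split.
      by apply: openI => //; exact: openK.
    split; first by exists s0; split => //=; rewrite normr_gt0.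
    move=> s [[Ws Hs] HD]; have [Us [Hk' HnE']] := HW s Ws.
    split => //; split; first by split.
    by split => // Ets; move: HD; rewrite /= DE // normr0 ltxx.
  have [N HN] := HA (nT / k) (divr_ge0 nT0 (ltW k0)).
  have [ts [Hsz [Hor [W [_ [[w Ww] HW]]]]]] := Iter N.
  have [_ [Hk _]] := HW w Ww.
  have Hs := Sum ts (q w) Hor (qbl w); rewrite -nqE in Hs.
  have H2 := big_lall_ge Hk; rewrite Hsz in H2.
  have H3 : k *+ N <= nT := le_trans H2 (le_trans Hs (nq_le w)).
  move: HN; rewrite ltr_pdivrMr // mulr_natl => HN.
  by move: H3; rewrite (lt_geF HN).
split => //; split.
  move=> _ [x Hx <-]; apply: le_trans (ler_normD _ _) _; apply: lerD => //.
  by apply: le_trans (nTle x) _; rewrite ler_piMr.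
move=> w Hw; apply/ler_addgt0Pr => e e0.
have e2 : 0 < e / 2 by rewrite divr_gt0.
have [s [Hs1 Hs2]] := part1 _ e2 _ e2.
set z := pi s (q s) in Hs2.
pose g := fun x => 1 * p s x + q s x.
have gb : bl g := bl_comb 1 (pbl s) (qbl s).
have dgw : dn g <= w.
  apply: dn_least => // x Hx; apply: le_trans (_ : _ <= `|x + T x|) _.
    by rewrite /g hq !hp -Jlin scale1r Jle.
  by apply: Hw; exists x.
have pig : pi s g = 1 + z by rewrite /g pi_lin ?pi_p ?mulr1 //; apply: bl_dual.
have [_ _ Ls] := LP s.
have E1 := Ls g gb; rewrite dnPE // pig in E1.
have E2 := Ls (q s) (qbl s); rewrite dnPE // -/z -nqE in E2.
have gq : (fun x => g x - P s g x) = (fun x => q s x - P s (q s) x).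
  by apply: funext => x; rewrite /P pig -/z /g; ring.
rewrite gq in E1.
have := ltrD Hs1 Hs2.
rewrite E2 => H.
apply: le_trans (_ : 1 + nT <= dn g + e) _; last by rewrite lerD2r.
rewrite E1; set A := dn _ in H *.
set h := e / 2 in H *.
rewrite (splitr e) -/h; apply: ltW.
rewrite -subr_gt0; move: H; rewrite -subr_gt0.
by rewrite (_ : `|z| + A + (`|1 + z| - (1 + `|z|)) - (nT - h + - h) =
   `|1 + z| + A + (h + h) - (1 + nT)) //; ring.
Qed.
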